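(* Consider a storage system for two files $a$ and $b$ consisting of $C\ge0$ coded nodes and no systematic nodes, each node with service rate $\mu>0$, in which any two distinct coded nodes together can recover file $a$ and can recover file $b$. If $C>1$, the service capacity region is the region bounded by $\lambda_a=0$, $\lambda_b=0$ and $\lambda_b=\frac{C}{2}\mu-\lambda_a$, i.e. $\{(\lambda_a,\lambda_b)\in\mathbb{R}_{\ge0}^2:\lambda_a+\lambda_b\le\frac{C}{2}\mu\}$. If $C\le1$, the service capacity region is the single point $(0,0)$.
   Context: The recovering sets of each file are exactly the $2$-element subsets of the set of $C$ coded nodes (a single coded node cannot recover either file). Requests for $a$ and $b$ arrive at rates $\lambda_a,\lambda_b\ge0$. The service capacity region is the set of $(\lambda_a,\lambda_b)$ for which there exist nonnegative rates assigned to the recovering sets of $a$ summing to $\lambda_a$ and to the recovering sets of $b$ summing to $\lambda_b$, such that for every node the total rate assigned to recovering sets containing it is at most $\mu$. (Here the total number of nodes is $N=C$.) *)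

(* Defs.v *)
From mathcomp Require Import all_boot all_order all_algebra.
Set Implicit Arguments. Unset Strict Implicit. Unset Printing Implicit Defensive.
Import Order.TTheory GRing.Theory Num.Theory.
Local Open Scope ring_scope.

(* Storage system with C coded nodes (indexed by 'I_C), no systematic nodes.
   Recovering sets of file a and of file b: exactly the 2-element subsets of
   the node set. *)
Definition recovering (C : nat) (S : {set 'I_C}) : bool := #|S| == 2%N.

Definition in_capacity_region (R : realFieldType) (C : nat) (mu : R)
    (la lb : R) : Prop :=
  exists (xa xb : {set 'I_C} -> R),
    (forall S, recovering S -> 0 <= xa S) /\
    (forall S, recovering S -> 0 <= xb S) /\
    \sum_(S | recovering S) xa S = la /\
    \sum_(S | recovering S) xb S = lb /\
    (forall i : 'I_C,
       \sum_(S | recovering S && (i \in S)) xa S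
     + \sum_(S | recovering S && (i \in S)) xb S <= mu).

(* Main.v *)
Require Import Defs.
From mathcomp Require Import all_boot all_order all_algebra.
From mathcomp Require Import ring lra.
Import Order.TTheory GRing.Theory Num.Theory.
Local Open Scope ring_scope.

Lemma dc (R : realFieldType) (C : nat) (f : {set 'I_C} -> R) :
  \sum_(i : 'I_C) \sum_(S | recovering S && (i \in S)) f S
  = (\sum_(S | recovering S) f S) *+ 2.
Proof.
rewrite (exchange_big_dep (fun S => recovering S)) /=; last by move=> i S _ /andP[].
rewrite -sumrMnl; apply: eq_bigr => S /eqP hS.
rewrite (eq_bigl (fun i => i \in S)); last by move=> i; rewrite /recovering hS eqxx.
by rewrite sumr_const hS.
Qed.

Lemma card_i (C : nat) (i : 'I_C) :
  #|[pred S : {set 'I_C} | recovering S && (i \in S)]| = C.-1.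
Proof.
have H : [pred S : {set 'I_C} | recovering S && (i \in S)] =i
          (fun j => [set i; j]) @: [set~ i].
  move=> S; rewrite [in LHS]inE /=; apply/andP/imsetP.
  - move=> [/cards2P [x [y [xy ->]]]]; rewrite in_set2 => /orP[] /eqP Ei; subst i.
      by exists y; rewrite // in_setC1 eq_sym.
    by exists x; [rewrite in_setC1 | rewrite setUC].
  - move=> [j]; rewrite in_setC1 => ji ->; split; last by rewrite set21.
    by rewrite /recovering cards2 [i == j]eq_sym ji.
rewrite (eq_card H) card_in_imset ?cardsC1 ?card_ord //.
move=> j k; rewrite !in_setC1 => ji ki /setP /(_ j); rewrite in_set2 eqxx (negbTE ji) /=.
by rewrite in_set2 (negbTE ji) => /esym/eqP.
Qed.

Lemma sum_rec (R : realFieldType) (C : nat) (x : R) :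
  \sum_(S : {set 'I_C} | recovering S) x = x *+ #|[set S : {set 'I_C} | recovering S]|.
Proof.
rewrite (eq_bigl (fun S => S \in [set S : {set 'I_C} | recovering S])).
  by rewrite sumr_const.
by move=> S; rewrite inE.
Qed.

Lemma sum_rec_i (R : realFieldType) (C : nat) (i : 'I_C) (x : R) :
  \sum_(S : {set 'I_C} | recovering S && (i \in S)) x = x *+ C.-1.
Proof.
rewrite -(@card_i C i) (eq_bigl (fun S => S \in [pred S : {set 'I_C} | recovering S && (i \in S)])).
  by rewrite sumr_const.
by move=> S.
Qed.

Theorem lemma4 (R : realFieldType) (C : nat) (mu : R) (hmu : 0 < mu) :
  ((1 < C)%N ->
    forall la lb : R,
      in_capacity_region C mu la lb <->
      [/\ 0 <= la, 0 <= lb & la + lb <= C%:R / 2 * mu])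
  /\
  ((C <= 1)%N ->
    forall la lb : R,
      in_capacity_region C mu la lb <-> (la = 0 /\ lb = 0)).
Proof.
split=> [hC la lb | hC la lb]; split.
- move=> [xa [xb [ha [hb [<- [<- hl]]]]]].
  split; [exact: sumr_ge0 | exact: sumr_ge0|].
  have h : \sum_(i : 'I_C) (\sum_(S | recovering S && (i \in S)) xa S
     + \sum_(S | recovering S && (i \in S)) xb S) <= \sum_(i : 'I_C) mu.
    by apply: ler_sum => i _; exact: hl.
  move: h; rewrite big_split /= !dc.
  have -> : \sum_(i < C) mu = mu *+ C by rewrite sumr_const card_ord.
  move: (\sum_(S | recovering S) xa S) (\sum_(S | recovering S) xb S) => A B.
  have c2 : ((2%N)%:R <= C%:R :> R). by rewrite ler_nat.
  rewrite -[A *+ 2]mulr_natr -[B *+ 2]mulr_natr -[mu *+ C]mulr_natr => h.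
  move: (C%:R) c2 h => c c2 h.
  have -> : c / 2 * mu = (mu * c) / 2 by rewrite mulrAC [c * mu]mulrC.
  rewrite ler_pdivlMr //; lra.
- move=> [hla hlb].
  rewrite (_ : C%:R / 2 * mu = (mu * C%:R) / 2); last by rewrite mulrAC [_ * mu]mulrC.
  rewrite ler_pdivlMr // => h.
  have := @sum_rec R C; move: (#|_|) => P sP.
  have sI := @sum_rec_i R C.
  have hP : (C.-1 * C = P * 2)%N.
    have := @dc R C (fun _ : {set 'I_C} => 1 : R).
    rewrite sP (eq_bigr (fun _ => (C.-1)%:R)); last by move=> i _; rewrite sI.
    rewrite sumr_const card_ord -!mulrnA => /eqP.
    by rewrite eqr_nat => /eqP.
  have hd : (0 < C.-1)%N by rewrite -subn1 subn_gt0.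
  have hc : (0 < C)%N by exact: ltnW.
  have hp : (0 < P)%N.
    by rewrite -(ltn_pmul2r (_ : 0 < 2)%N) // mul0n -hP muln_gt0 hd hc.
  exists (fun _ => la / P%:R), (fun _ => lb / P%:R).
  split; first by move=> S _; apply: divr_ge0; rewrite ?ler0n.
  split; first by move=> S _; apply: divr_ge0; rewrite ?ler0n.
  split; first by rewrite sP -[_ *+ P]mulr_natr mulfVK // pnatr_eq0 -lt0n.
  split; first by rewrite sP -[_ *+ P]mulr_natr mulfVK // pnatr_eq0 -lt0n.
  move=> i; rewrite !sI -[la / _ *+ _]mulr_natr -[lb / _ *+ _]mulr_natr.
  have epd : (P%:R : R) = (C.-1)%:R * C%:R / 2.
    by rewrite -natrM hP natrM mulfK // pnatr_eq0.
  have dn : ((C.-1)%:R : R) != 0 by rewrite pnatr_eq0 -lt0n.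
  have cn : ((C)%:R : R) != 0 by rewrite pnatr_eq0 -lt0n.
  rewrite epd.
  have cp : (0 < C%:R :> R) by rewrite ltr0n.
  move: ((C.-1)%:R : R) (C%:R : R) dn cn cp h => d c dn cn cp h.
  rewrite (_ : la / (d * c / 2) * d + lb / (d * c / 2) * d = (la + lb) * 2 / c); last by field; rewrite ?mulf_neq0 ?dn ?cn.
  by rewrite ler_pdivrMr.
- move=> [xa [xb [_ [_ [<- [<- _]]]]]].
  have no : forall S : {set 'I_C}, recovering S = false.
    move=> S; apply/negbTE; rewrite /recovering; have := max_card (mem S).
    rewrite card_ord => hS; apply/negP => e; move: (leq_trans hS hC); rewrite (eqP e).
    by [].
  by split; apply: big_pred0 => S; exact: no.
- move=> [-> ->]; exists (fun _ => 0), (fun _ => 0).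
  split; first by [].
  split; first by [].
  split; first by rewrite big1.
  split; first by rewrite big1.
  by move=> i; rewrite !big1 // addr0; exact: ltW.
Qed.
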